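(* Let $q,z,m$ be positive integers with $q\geq 2$ and $z<q$, and put $L=\lfloor\frac{q-1}{q-z}\rfloor$. Let rows be indexed by $\mathcal{F}=\{(a_0,\ldots,a_{m-1},\varepsilon): a_l\in\mathbb{Z}_q,\ \varepsilon\in\{0,\ldots,L-1\}\}$. Define the $Lq^m\times mq$ array $\mathbf{P}=(p_{\mathbf{a},(b,\delta)})$ with columns $(b,\delta)$, $b\in\mathbb{Z}_q$, $0\leq\delta<m$, by: $p_{\mathbf{a},(b,\delta)}=*$ if $a_\delta\in\{b,b-1,\ldots,b-(z-1)\}$, and otherwise $p_{\mathbf{a},(b,\delta)}=(a_0,\ldots,a_{\delta-1},\,b-\varepsilon(q-z),\,a_{\delta+1},\ldots,a_{m-1},\,a_\delta-b-1)$. Define the $Lq^m\times q$ array $\mathbf{C}=(c_{\mathbf{a},(b,m)})$ with columns $(b,m)$, $b\in\mathbb{Z}_q$, by: writing $\sigma=\sum_{l=0}^{m-1}a_l-\varepsilon(q-z)$, $c_{\mathbf{a},(b,m)}=*$ if $\sigma\in\{b,b+1,\ldots,b+(z-1)\}$, and otherwise $c_{\mathbf{a},(b,m)}=(a_0,\ldots,a_{m-1},\,b-\sigma-1)$. All arithmetic is modulo $q$. Then $\mathbf{H}=(\mathbf{P},\mathbf{C})$ (the columns of $\mathbf{P}$ followed by those of $\mathbf{C}$) is an $\big((m+1)q,\ Lq^m,\ zLq^{m-1},\ (q-z)q^m\big)$ placement delivery array. In particular the associated coded caching scheme has $\frac{M}{N}=\frac{z}{q}$ and rate $R=(q-z)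/L$.
   Context: A $(K,F,Z,S)$ placement delivery array (PDA) is an $F\times K$ array whose entries are either a special symbol $*$ or one of $S$ distinct non-star symbols (identified with $1,\ldots,S$), such that: (C1) $*$ appears exactly $Z$ times in each column; (C2) each of the $S$ symbols occurs at least once; (C3) for any two distinct entries $p_{j_1,k_1}=p_{j_2,k_2}=s$ with $s$ a non-star symbol, we have $j_1\neq j_2$, $k_1\neq k_2$, and $p_{j_1,k_2}=p_{j_2,k_1}=*$. A $(K,F,Z,S)$ PDA yields an $F$-division coded caching scheme for $K$ users with memory ratio $M/N=Z/F$ and rate $R=S/F$. The non-star symbols here are vectors in $\mathbb{Z}_q^{m+1}$. *)

(* Defs.v *)
From HB Require Import structures.
From mathcomp Require Import all_boot all_order all_algebra.
Set Implicit Arguments. Unset Strict Implicit. Unset Printing Implicit Defensive.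
Import GRing.Theory.
Local Open Scope ring_scope.

(* A PDA is an array indexed by a finite row type (F rows) and a finite
   column type (K columns); an entry is [None] for the star symbol and
   [Some s] for a non-star symbol s. *)
Definition is_PDA (Row Col Sym : finType) (p : Row -> Col -> option Sym)
  (K F Z S : nat) : Prop :=
  [/\ #|Col| = K, #|Row| = F,
      (forall k : Col, #|[set j : Row | p j k == None]| = Z),
      #|[set s : Sym | [exists j : Row, exists k : Col, p j k == Some s]]| = S &
      (forall (j1 j2 : Row) (k1 k2 : Col) (s : Sym),
         p j1 k1 = Some s -> p j2 k2 = Some s -> (j1, k1) <> (j2, k2) ->
         [/\ j1 <> j2, k1 <> k2, p j1 k2 = None & p j2 k1 = None])]%N.

Definition rowT (q m L : nat) := ({ffun 'I_m -> 'Z_q} * 'I_L)%type.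
(* Columns: inl (b, delta) for P, inr b for C (the column (b,m)). *)
Definition colT (q m : nat) := (('Z_q * 'I_m) + 'Z_q)%type.
Definition symT (q m : nat) := {ffun 'I_m.+1 -> 'Z_q}.

Definition Lpar (q z : nat) : nat := ((q - 1) %/ (q - z))%N.

Definition Pentry (q z m : nat) (r : rowT q m (Lpar q z)) (b : 'Z_q) (d : 'I_m)
  : option (symT q m) :=
  let a := r.1 in let eps := r.2 in
  if [exists i : 'I_z, a d == b - (i : nat)%:R] then None
  else Some [ffun i : 'I_m.+1 =>
               match unlift ord_max i with
               | Some l => if l == d then b - (eps : nat)%:R * (q - z)%:R else a l
               | None => a d - b - 1
               end].

Definition Centry (q z m : nat) (r : rowT q m (Lpar q z)) (b : 'Z_q)
  : option (symT q m) :=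
  let a := r.1 in let eps := r.2 in
  let sigma := \sum_(l < m) a l - (eps : nat)%:R * (q - z)%:R in
  if [exists i : 'I_z, sigma == b + (i : nat)%:R] then None
  else Some [ffun i : 'I_m.+1 =>
               match unlift ord_max i with
               | Some l => a l
               | None => b - sigma - 1
               end].

Definition Harray (q z m : nat) (r : rowT q m (Lpar q z)) (c : colT q m)
  : option (symT q m) :=
  match c with
  | inl (b, d) => @Pentry q z m r b d
  | inr b => @Centry q z m r b
  end.

(* Main.v *)
Require Import Defs.
From mathcomp Require Import all_boot all_order all_algebra.
From mathcomp Require Import zify ring.
Set Implicit Arguments. Unset Strict Implicit. Unset Printing Implicit Defensive.
Import GRing.Theory.
Local Open Scope ring_scope.

Section Z0.
Variable p : nat.
Local Notation q := p.+2.
Implicit Types x y : 'Z_q.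

Lemma vD x y : nat_of_ord (x + y) = if (nat_of_ord x + nat_of_ord y < q)%N then (nat_of_ord x + nat_of_ord y)%N else (nat_of_ord x + nat_of_ord y - q)%N.
Proof.
case: x y => [x hx] [y hy] /=; have {}hx : (x < q)%N := hx; have {}hy : (y < q)%N := hy; case: ifP => h.
  by rewrite modn_small.
have ->: (x + y = (x + y - q) + q)%N by lia.
rewrite modnDr modn_small; lia.
Qed.

Lemma vN x : nat_of_ord (- x) = if nat_of_ord x == 0%N then 0%N else (q - nat_of_ord x)%N.
Proof.
case: x => [x hx] /=; have {}hx : (x < q)%N := hx; case: eqP => [->|h]; first by rewrite subn0 modnn.
rewrite modn_small //; lia.
Qed.

Lemma vB x y : nat_of_ord (x - y) = if (nat_of_ord y <= nat_of_ord x)%N then (nat_of_ord x - nat_of_ord y)%N else (q + nat_of_ord x - nat_of_ord y)%N.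
Proof.
rewrite vD vN; case: x y => [x hx] [y hy] /=; have {}hx : (x < q)%N := hx; have {}hy : (y < q)%N := hy.
case: eqP => [->|h]; first by rewrite addn0 hx subn0.
case: ifP; case: ifP; lia.
Qed.

Lemma vnat k : (k < q)%N -> nat_of_ord (k%:R : 'Z_q) = k.
Proof. by move=> h; rewrite Zp_nat /= modn_small. Qed.

Lemma vinj x y : nat_of_ord x = nat_of_ord y -> x = y.
Proof. exact: ord_inj. Qed.

Lemma natrv x : (nat_of_ord x)%:R = x.
Proof. exact: natr_Zp. Qed.
End Z0.

Section Z1.
Variables p z : nat.
Local Notation q := p.+2.
Hypothesis z0 : (0 < z)%N.
Hypothesis zq : (z < q)%N.
Local Notation n := (q - z)%N.
Local Notation L := ((q - 1) %/ (q - z))%N.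
Implicit Types x y : 'Z_q.
Lemma v1 : nat_of_ord (1 : 'Z_q) = 1%N. Proof. by []. Qed.
Definition e (u : nat) : 'Z_q := u%:R * n%:R.

Lemma Lbound u : (u < L)%N -> (u * n + n <= q - 1)%N.
Proof.
move=> h; apply: leq_trans (leq_divM (q - 1) n).
rewrite addnC -mulSn; apply: leq_mul => //.
Qed.

Lemma ve u : (u < L)%N -> nat_of_ord (e u) = (u * n)%N.
Proof. by move=> h; rewrite /e -natrM vnat //; have := Lbound h; lia. Qed.

Lemma starP x y : [exists i : 'I_z, x == y - (i : nat)%:R] = (nat_of_ord ((y - x)%R) < z)%N.
Proof.
apply/existsP/idP => [[i /eqP ->]|h].
  have -> : y - (y - (i : nat)%:R) = (i : nat)%:R by ring.
  by move: (ltn_ord i) => hi; rewrite vnat //; lia.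
have e1 : ((nat_of_ord ((y - x)%R))%:R : 'Z_q) = y - x := natrv _.
exists (Ordinal h); rewrite /= e1; apply/eqP; ring.
Qed.

Lemma starC x y : [exists i : 'I_z, x == y + (i : nat)%:R] = (nat_of_ord ((x - y)%R) < z)%N.
Proof.
apply/existsP/idP => [[i /eqP ->]|h].
  have -> : y + (i : nat)%:R - y = (i : nat)%:R by ring.
  by move: (ltn_ord i) => hi; rewrite vnat //; lia.
have e1 : ((nat_of_ord ((x - y)%R))%:R : 'Z_q) = x - y := natrv _.
exists (Ordinal h); rewrite /= e1; apply/eqP; ring.
Qed.

Lemma keyK x u v : (z <= nat_of_ord x)%N -> (u < L)%N -> (v < L)%N -> u != v ->
  (nat_of_ord ((x + e u - e v)%R) < z)%N.
Proof.
move=> hx hu hv huv; rewrite vB vD !ve //.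
have hxq : (nat_of_ord x < q)%N := ltn_ord x.
have bu := Lbound hu; have bv := Lbound hv.
have h1 : (u < v)%N -> (u * n + n <= v * n)%N by move=> h; rewrite addnC -mulSn leq_mul.
have h2 : (v < u)%N -> (v * n + n <= u * n)%N by move=> h; rewrite addnC -mulSn leq_mul.
move: (u * n)%N (v * n)%N h1 h2 bu bv => U V h1 h2 bu bv.
have : (u < v)%N \/ (v < u)%N by lia.
case => h; [have := h1 h|have := h2 h]; case: ifP; case: ifP; lia.
Qed.

Lemma lastP x : (z <= nat_of_ord x)%N -> (nat_of_ord ((- x - 1)%R) < n)%N.
Proof.
move=> hx; have hxq : (nat_of_ord x < q)%N := ltn_ord x.
rewrite vB vN v1; have -> : (nat_of_ord x == 0%N) = false by lia.
case: ifP; lia.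
Qed.

Lemma lastC x : (nat_of_ord x < n)%N -> (z <= nat_of_ord ((- x - 1)%R))%N.
Proof.
move=> hx; have hxq : (nat_of_ord x < q)%N := ltn_ord x.
rewrite vB vN v1; move: (nat_of_ord x) hx hxq => X hx hxq.
case: (X =P 0%N) => [e|ne] /=; try case: ifP; lia.
Qed.

Lemma eval_lt u : (u < L)%N -> (nat_of_ord (e u) < z)%N.
Proof. by move=> h; rewrite ve //; have := Lbound h; lia. Qed.

Lemma e_inj u v : (u < L)%N -> (v < L)%N -> e u = e v -> u = v.
Proof.
move=> hu hv /(congr1 (@nat_of_ord _)); rewrite !ve //.
have : (0 < n)%N by lia.
by move=> n0 /eqP; rewrite eqn_pmul2r // => /eqP.
Qed.
End Z1.

Section C3.
Variables p z m : nat.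
Local Notation q := p.+2.
Hypothesis z0 : (0 < z)%N.
Hypothesis zq : (z < q)%N.
Local Notation n := (q - z)%N.
Local Notation L := (Lpar q z).
Local Notation e := (@e p z).
Local Notation row := (rowT q m L).
Local Notation sP := (starP z0 zq).
Local Notation sC := (starC z0 zq).
Local Notation kK := (keyK z0 zq).
Local Notation lP := (lastP z0 zq).
Local Notation lC := (lastC z0 zq).
Local Notation eL := (eval_lt z0 zq).
Local Notation eI := (e_inj z0 zq).

Definition sigm (r : row) : 'Z_q := \sum_(l < m) r.1 l - e r.2.

Lemma PNone (r : row) b d : (nat_of_ord ((b - r.1 d)%R) < z)%N -> Pentry r b d = None.
Proof. by move=> h; rewrite /Pentry sP; case: ifP => // /negP []; exact: h. Qed.

Lemma CNone (r : row) b : (nat_of_ord ((sigm r - b)%R) < z)%N -> Centry r b = None.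
Proof. by move=> h; rewrite /Centry sC; case: ifP => // /negP []; exact: h. Qed.

Lemma PSome (r : row) b d s : Pentry r b d = Some s ->
  [/\ (z <= nat_of_ord ((b - r.1 d)%R))%N, s ord_max = r.1 d - b - 1,
      s (lift ord_max d) = b - e r.2 &
      forall l, l != d -> s (lift ord_max l) = r.1 l].
Proof.
rewrite /Pentry sP; case: ifP => // /negbT; rewrite -leqNgt => h [<-].
split => //; first by rewrite ffunE unlift_none.
  by rewrite ffunE liftK eqxx.
by move=> l /negbTE hl; rewrite ffunE liftK hl.
Qed.

Lemma CSome (r : row) b s : Centry r b = Some s ->
  [/\ (z <= nat_of_ord ((sigm r - b)%R))%N, s ord_max = b - sigm r - 1 &
      forall l, s (lift ord_max l) = r.1 l].
Proof.
rewrite /Centry sC -/(e _) -/(sigm r); case: ifP => // /negbT; rewrite -leqNgt => h [<-].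
split => //; first by rewrite ffunE unlift_none.
by move=> l; rewrite ffunE liftK.
Qed.

Lemma sum_diff (a a' : {ffun 'I_m -> 'Z_q}) d : (forall l, l != d -> a l = a' l) ->
  \sum_l a l - \sum_l a' l = a d - a' d.
Proof.
move=> h; rewrite (bigD1 d) //= [X in _ - X](bigD1 d) //=.
rewrite (eq_bigr (fun l => a' l)); last by move=> l /h.
set S := \sum_(i | _) _; ring.
Qed.

Lemma casePP (j1 j2 : row) b1 b2 d1 d2 s :
  Pentry j1 b1 d1 = Some s -> Pentry j2 b2 d2 = Some s ->
  ~ (j1 = j2 /\ b1 = b2 /\ d1 = d2) ->
  Pentry j1 b2 d2 = None /\ Pentry j2 b1 d1 = None.
Proof.
case: j1 => a1 e1; case: j2 => a2 e2.
move=> /PSome [n1 m1 dd1 o1] /PSome [n2 m2 dd2 o2] ne; cbn [fst snd] in *.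
have [dE|dN] := eqVneq d1 d2.
  subst d2.
  have hb : b1 - e e1 = b2 - e e2 by rewrite -dd1 dd2.
  have Hb : b2 = b1 - e e1 + e e2 by rewrite hb; ring.
  have Ha : a2 d1 = a1 d1 - b1 + b2.
    have -> : a2 d1 = (a2 d1 - b2 - 1) + b2 + 1 by ring.
    rewrite -m2 m1; ring.
  have ee : (e1 : nat) != e2.
    apply/negP => /eqP E; apply: ne.
    have E' : e1 = e2 by apply: val_inj.
    subst e2.
    have bE : b1 = b2 by rewrite Hb; ring.
    subst b2.
    have aE : a1 = a2.
      apply/ffunP => l; have [->|hl] := eqVneq l d1.
        by rewrite Ha; ring.
      by rewrite -o1 // o2.
    by subst a2.
  split; apply: PNone; cbn [fst snd].
    have -> : b2 - a1 d1 = (b1 - a1 d1) + e e2 - e e1 by rewrite Hb; ring.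
    by apply: kK => //; rewrite eq_sym.
  have -> : b1 - a2 d1 = (b1 - a1 d1) + e e1 - e e2 by rewrite Ha Hb; ring.
  by apply: kK.
split; apply: PNone; cbn [fst snd].
  have h : a1 d2 = b2 - e e2 by rewrite -o1 1?eq_sym // dd2.
  have -> : b2 - a1 d2 = e e2 by rewrite h; ring.
  by apply: eL.
have h : a2 d1 = b1 - e e1 by rewrite -o2 // dd1.
have -> : b1 - a2 d1 = e e1 by rewrite h; ring.
by apply: eL.
Qed.

Lemma casePC (j1 j2 : row) b1 d b2 s :
  Pentry j1 b1 d = Some s -> Centry j2 b2 = Some s ->
  Centry j1 b2 = None /\ Pentry j2 b1 d = None.
Proof.
case: j1 => a1 e1; case: j2 => a2 e2.
move=> /PSome [n1 m1 dd1 o1] /CSome [n2 m2 o2]; cbn [fst snd] in *.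
have Ha2 : a2 d = b1 - e e1 by rewrite -o2 dd1.
have Hs := @sum_diff a1 a2 d (fun l hl => etrans (esym (o1 l hl)) (o2 l)).
have HS : \sum_l a1 l = \sum_l a2 l + (a1 d - a2 d) by rewrite -Hs; ring.
have Hb2 : b2 = sigm (a2, e2) + a1 d - b1.
  have -> : b2 = (b2 - sigm (a2, e2) - 1) + sigm (a2, e2) + 1 by ring.
  rewrite -m2 m1; ring.
split.
  apply: CNone.
  have -> : sigm (a1, e1) - b2 = e e2.
    by rewrite Hb2 /sigm; cbn [fst snd]; rewrite HS Ha2; ring.
  by apply: eL.
apply: PNone; cbn [fst snd].
have -> : b1 - a2 d = e e1 by rewrite Ha2; ring.
by apply: eL.
Qed.

Lemma caseCC (j1 j2 : row) b1 b2 s :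
  Centry j1 b1 = Some s -> Centry j2 b2 = Some s ->
  ~ (j1 = j2 /\ b1 = b2) ->
  Centry j1 b2 = None /\ Centry j2 b1 = None.
Proof.
case: j1 => a1 e1; case: j2 => a2 e2.
move=> /CSome [n1 m1 o1] /CSome [n2 m2 o2] ne; cbn [fst snd] in *.
have aE : a1 = a2 by apply/ffunP => l; rewrite -o1 o2.
subst a2.
have Hb : b2 = b1 - sigm (a1, e1) + sigm (a1, e2).
  have -> : b2 = (b2 - sigm (a1, e2) - 1) + sigm (a1, e2) + 1 by ring.
  rewrite -m2 m1; ring.
have ee : (e1 : nat) != e2.
  apply/negP => /eqP E; apply: ne.
  have E' : e1 = e2 by apply: val_inj.
  subst e2; split => //; rewrite Hb; ring.
split; apply: CNone.
  have -> : sigm (a1, e1) - b2 = (sigm (a1, e1) - b1) + e e2 - e e1.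
    by rewrite Hb /sigm; cbn [fst snd]; ring.
  by apply: kK => //; rewrite eq_sym.
have -> : sigm (a1, e2) - b1 = (sigm (a1, e1) - b1) + e e1 - e e2.
  by rewrite /sigm; cbn [fst snd]; ring.
by apply: kK.
Qed.

Lemma PNoneE (r : row) b d : (Pentry r b d == None) = (nat_of_ord ((b - r.1 d)%R) < z)%N.
Proof. by rewrite /Pentry sP; case: ifP. Qed.

Lemma CNoneE (r : row) b : (Centry r b == None) = (nat_of_ord ((sigm r - b)%R) < z)%N.
Proof. by rewrite /Centry sC -/(e _) -/(sigm r); case: ifP. Qed.
End C3.

Lemma foldr_prod (s : seq nat) : foldr muln 1%N s = (\prod_(i <- s) i)%N.
Proof. elim: s => [|x s IH]. by rewrite big_nil. by rewrite big_cons -IH. Qed.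

Section Count.
Variables p m : nat.
Local Notation q := p.+2.
Hypothesis m0 : (0 < m)%N.

Lemma cardZlt k : (k <= q)%N -> #|[set c : 'Z_q | (nat_of_ord c < k)%N]| = k.
Proof.
move=> hk.
pose f : 'I_k -> 'Z_q := fun i => widen_ord hk i.
have -> : [set c : 'Z_q | (nat_of_ord c < k)%N] = f @: [set: 'I_k].
  apply/setP => c; rewrite inE; apply/idP/imsetP => [h|[i _ ->]]; last exact: ltn_ord i.
  by exists (Ordinal h) => //; apply: ord_inj.
have inj : injective f by move=> x y h; apply: ord_inj; exact: (congr1 (@nat_of_ord _) h).
by rewrite card_imset // cardsT card_ord.
Qed.

Lemma card_coord (P : pred 'Z_q) d :
  #|[set a : {ffun 'I_m -> 'Z_q} | P (a d)]| = (#|[set c | P c]| * q ^ (m - 1))%N.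
Proof.
pose F := fun i : 'I_m => if i == d then P else predT.
have -> : #|[set a : {ffun 'I_m -> 'Z_q} | P (a d)]| = #|family F|.
  apply: eq_card => a; rewrite inE; apply/idP/familyP.
    by move=> h i; rewrite /F; case: eqP => [->|].
  by move=> /(_ d); rewrite /F eqxx.
rewrite card_family foldr_prod big_image (bigD1 d) //= /F eqxx.
rewrite (eq_bigr (fun _ => q)); last first.
  by move=> i /negbTE ->; exact: card_ord.
rewrite prod_nat_const cardC1 card_ord cardsE; congr (_ * _)%N.
by rewrite subn1.
Qed.
End Count.

Lemma card_sumP (T : finType) (P : pred T) : #|[set x | P x]| = (\sum_x (P x : nat))%N.
Proof.
rewrite -sum1_card big_mkcond; apply: eq_bigr => x _; rewrite inE; by case: (P x).
Qed.

Section Count2.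
Variables p z m : nat.
Local Notation q := p.+2.
Hypothesis z0 : (0 < z)%N.
Hypothesis zq : (z < q)%N.
Hypothesis m0 : (0 < m)%N.
Local Notation n := (q - z)%N.
Local Notation L := (Lpar q z).
Local Notation e := (@e p z).
Local Notation row := (rowT q m L).

Lemma card_rows (Q : pred row) :
  #|[set r : row | Q r]| = (\sum_(u : 'I_L) #|[set a | Q (a, u)]|)%N.
Proof.
rewrite card_sumP.
transitivity (\sum_(p0 : row) (Q (p0.1, p0.2) : nat))%N; first by apply: eq_bigr => -[a u].
rewrite -(pair_bigA _ (fun a u => (Q (a, u) : nat))) /= exchange_big /=.
by apply: eq_bigr => u _; rewrite card_sumP.
Qed.

Lemma cardP_col b d (u : 'I_L) :
  #|[set a : {ffun 'I_m -> 'Z_q} | Pentry (a, u) b d == None]| = (z * q ^ (m - 1))%N.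
Proof.
have -> : [set a : {ffun 'I_m -> 'Z_q} | Pentry (a, u) b d == None] =
          [set a : {ffun 'I_m -> 'Z_q} | (fun c : 'Z_q => (nat_of_ord ((b - c)%R) < z)%N) (a d)].
  by apply/setP => a; rewrite !inE (PNoneE z0 zq).
rewrite (card_coord (fun c : 'Z_q => (nat_of_ord ((b - c)%R) < z)%N)); congr (_ * _)%N.
have inj : injective (fun c : 'Z_q => b - c) by move=> x y /= /addrI /oppr_inj.
have -> : [set c : 'Z_q | (nat_of_ord ((b - c)%R) < z)%N] =
          (fun c : 'Z_q => b - c) @^-1: [set c : 'Z_q | (nat_of_ord c < z)%N].
  by apply/setP => c; rewrite !inE.
by rewrite card_preimset // cardZlt // ltnW.
Qed.

Lemma cardC_col b (u : 'I_L) :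
  #|[set a : {ffun 'I_m -> 'Z_q} | Centry (a, u) b == None]| = (z * q ^ (m - 1))%N.
Proof.
pose d0 : 'I_m := Ordinal m0.
pose g (a : {ffun 'I_m -> 'Z_q}) : {ffun 'I_m -> 'Z_q} :=
  [ffun l => if l == d0 then \sum_l a l - e u - b else a l].
have inj : injective g.
  move=> a a' E.
  have o : forall l, l != d0 -> a l = a' l.
    by move=> l hl; have := congr1 (fun f : {ffun 'I_m -> 'Z_q} => f l) E; rewrite /= !ffunE (negbTE hl).
  have := congr1 (fun f : {ffun 'I_m -> 'Z_q} => f d0) E; rewrite /= !ffunE eqxx => E0.
  have Hs := sum_diff o.
  apply/ffunP => l; have [->|hl] := eqVneq l d0; last exact: o.
  apply/eqP; rewrite -subr_eq0 -Hs subr_eq0; apply/eqP.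
  by move: E0 => /addIr /addIr.
have -> : [set a : {ffun 'I_m -> 'Z_q} | Centry (a, u) b == None] =
          g @^-1: [set a : {ffun 'I_m -> 'Z_q} | (fun c : 'Z_q => (nat_of_ord c < z)%N) (a d0)].
  by apply/setP => a; rewrite !inE (CNoneE z0 zq) /g ffunE eqxx.
by rewrite card_preimset // (card_coord (fun c : 'Z_q => (nat_of_ord c < z)%N)) cardZlt // ltnW.
Qed.
End Count2.

Theorem theorem3 (q z m : nat) :
  (2 <= q)%N -> (0 < z)%N -> (z < q)%N -> (0 < m)%N ->
  is_PDA (@Harray q z m)
    ((m + 1) * q) (Lpar q z * q ^ m) (z * Lpar q z * q ^ (m - 1)) ((q - z) * q ^ m).
Proof.
case: q => [|[|p]] // _ z0 zq m0.
have L0 : (0 < Lpar p.+2 z)%N by rewrite /Lpar divn_gt0; lia.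
have tr : Zp_trunc p.+2 = p by [].
split.
- rewrite card_sum card_prod !card_ord tr; nia.
- rewrite card_prod card_ffun !card_ord tr; nia.
- move=> [[b d]|b].
    rewrite (card_rows (fun r => Harray r (inl (b, d)) == None)).
    rewrite (eq_bigr (fun _ => z * p.+2 ^ (m - 1)))%N; last by move=> u _; exact: cardP_col.
    rewrite sum_nat_const card_ord; nia.
  rewrite (card_rows (fun r => Harray r (inr b) == None)).
  rewrite (eq_bigr (fun _ => z * p.+2 ^ (m - 1)))%N; last by move=> u _; exact: cardC_col.
  rewrite sum_nat_const card_ord; nia.
- have -> : [set s : symT p.+2 m | [exists j, exists k, @Harray p.+2 z m j k == Some s]] =
            [set s : symT p.+2 m | (fun c : 'Z_p.+2 => (nat_of_ord c < p.+2 - z)%N) (s ord_max)].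
    apply/setP => s; rewrite !inE; apply/idP/idP.
      move=> /existsP [j /existsP [k /eqP h]].
      case: k h => [[b d]|b] /= h.
        have [n1 m1 _ _] := PSome z0 zq h; rewrite m1.
        have -> : j.1 d - b - 1 = - (b - j.1 d) - 1 by ring.
        exact: (lastP z0 zq n1).
      have [n1 m1 _] := CSome z0 zq h; rewrite m1.
      have -> : b - sigm j - 1 = - (sigm j - b) - 1 by ring.
      exact: (lastP z0 zq n1).
    move=> hs.
    pose a : {ffun 'I_m -> 'Z_p.+2} := [ffun l => s (lift ord_max l)].
    pose r : rowT p.+2 m (Lpar p.+2 z) := (a, Ordinal L0).
    pose b := sigm r + s ord_max + 1.
    apply/existsP; exists r; apply/existsP; exists (inr b) => /=.
    case E: (Centry r b) => [s'|].
      have [_ m1 o1] := CSome z0 zq E.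
      apply/eqP; congr Some; apply/ffunP => i.
      case: (unliftP ord_max i) => [l ->|->].
        by rewrite o1 /a /= ffunE.
      by rewrite m1 /b; ring.
    move/eqP: E; rewrite (CNoneE z0 zq).
    have -> : sigm r - b = - s ord_max - 1 by rewrite /b; ring.
    by rewrite ltnNge (lastC z0 zq hs).
  rewrite (@card_coord p m.+1 (fun c : 'Z_p.+2 => (nat_of_ord c < p.+2 - z)%N) ord_max).
  rewrite cardZlt; last lia.
  by rewrite subn1.
- move=> j1 j2 k1 k2 s h1 h2 ne.
  have [c1 c2] : Harray j1 k2 = None /\ Harray j2 k1 = None.
    case: k1 h1 ne => [[b1 d1]|b1] h1 ne; case: k2 h2 ne => [[b2 d2]|b2] h2 ne /=.
    + by apply: (casePP z0 zq h1 h2) => -[E1 [E2 E3]]; apply: ne; subst.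
    + exact: (casePC z0 zq h1 h2).
    + by have [x y] := casePC z0 zq h2 h1; split.
    + by apply: (caseCC z0 zq h1 h2) => -[E1 E2]; apply: ne; subst.
  split => // E; subst.
    by rewrite c1 in h2.
  by rewrite c1 in h1.
Qed.
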